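(* For every positive integer $n$, as formal power series in $x$, $$\frac{\mathrm{ODP}(\mathrm{Tour}_n,\mathrm{Cycle}_n)}{(1-x)^n}=n\sum_{m=0}^{\infty}m^{n-1}x^m,$$ with the convention $0^0=1$.
   Context: $\mathrm{Tour}_n$ is the directed graph on $[n]$ with edges $i\to j$ for all $n\ge i>j\ge1$. For $n\ge2$, $\mathrm{Cycle}_n$ is the directed multigraph on $[n]$ with edges $i\to i+1$ ($1\le i\le n-1$) and $n\to1$; for $n=2$ its edges are $1\to2$ and $2\to1$. $\mathrm{Cycle}_1$ is a single vertex (loops are irrelevant). For directed graphs $X,Y$ with $|V(X)|=|V(Y)|$, $\mathrm{DFS}(X,Y)$ has as vertices the bijections $\sigma:V(X)\to V(Y)$. For each $\sigma$ and ordered pair $(a,b)$ of distinct vertices, it has $m_X(a,b)m_Y(\sigma(a),\sigma(b))$ edges from $\sigma$ to $\sigma\circ(a\,b)$, where $m_X(a,b)$ is the number of edges $a\to b$ in $X$. Thus $\mathrm{outdeg}(\sigma)=\sum_{a\ne b}m_X(a,b)m_Y(\sigma(a),\sigma(b))$ and $\mathrm{ODP}(X,Y)=\sum_\sigma x^{\mathrm{outdeg}(\sigma)}$. *)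

(* Defs.v *)
From HB Require Import structures.
From mathcomp Require Import all_boot all_order all_algebra all_fingroup.
Set Implicit Arguments. Unset Strict Implicit. Unset Printing Implicit Defensive.
Import GRing.Theory.
Local Open Scope ring_scope.

(* Directed multigraphs on the vertex set 'I_n (vertex i : 'I_n stands for
   the label i+1 in [n]), given by their edge-multiplicity function:
   mult a b = number of edges a -> b. *)
Definition dmgraph (n : nat) := 'I_n -> 'I_n -> nat.

Definition Tour (n : nat) : dmgraph n := fun a b => (b < a)%N : nat.

(* For n = 2 this gives 1->2 and 2->1; for n = 1 the only
   "edge" is a loop, which is irrelevant (only pairs a <> b are counted). *)
Definition Cycle (n : nat) : dmgraph n :=
  fun a b => (val b == (val a).+1 %% n)%N : nat.

(* Out-degree of sigma in DFS(X,Y): sum over ordered pairs a <> b of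
   m_X(a,b) * m_Y(sigma a, sigma b). *)
Definition dfs_outdeg (n : nat) (X Y : dmgraph n) (s : 'S_n) : nat :=
  (\sum_(a : 'I_n) \sum_(b : 'I_n | a != b) X a b * Y (s a) (s b))%N.

Definition ODP (n : nat) (X Y : dmgraph n) : {poly int} :=
  \sum_(s : 'S_n) 'X^(dfs_outdeg X Y s).

Arguments Tour n : clear implicits.
Arguments Cycle n : clear implicits.

(* Main.v *)
Require Import Defs.
From mathcomp Require Import all_boot all_order all_algebra all_fingroup.
From mathcomp Require Import zify ring.
From Stdlib Require Import FunctionalExtensionality.
Set Implicit Arguments. Unset Strict Implicit. Unset Printing Implicit Defensive.
Import GRing.Theory Num.Theory.

Fixpoint des (s : seq nat) : nat :=
  match s with
  | x :: ((y :: _) as r) => ((y < x) + des r)%N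
  | _ => 0%N
  end.

Definition ins (j M : nat) (t : seq nat) := take j t ++ M :: drop j t.

Lemma des_cons2 x y r : des [:: x, y & r] = ((y < x) + des (y :: r))%N.
Proof. reflexivity. Qed.
Lemma ins0 M t : ins 0 M t = M :: t. Proof. by rewrite /ins take0 drop0. Qed.
Lemma insS j M x t : ins j.+1 M (x :: t) = x :: ins j M t. Proof. reflexivity. Qed.

Local Open Scope ring_scope.

Lemma sum_recl (F : nat -> int) n :
  \sum_(j < n.+1) F j = F 0%N + \sum_(j < n) F j.+1.
Proof. by rewrite big_ord_recl; congr (_ + _); apply: eq_bigr => i _; rewrite lift0. Qed.

Lemma ins_sum (M : nat) (t : seq nat) (f : nat -> int) : all (fun y => y < M)%N t ->
  \sum_(j < (size t).+1) f (des (ins j M t)) =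
  (des t).+1%:R * f (des t) + ((size t)%:R - (des t)%:R) * f (des t).+1.
Proof.
elim: t f => [|x r IH] f.
  by move=> _; rewrite big_ord_recl big_ord0 /= addr0 mul1r subrr mul0r addr0.
move=> /andP[xM rM].
rewrite (sum_recl (fun j => f (des (ins j M (x :: r))))) ins0.
case: r IH rM => [|y r'] IH rM.
  rewrite (sum_recl (fun j => f (des (ins j.+1 M [:: x])))) big_ord0.
  rewrite /ins /= xM [(M < x)%N]ltnNge (ltnW xM) /=.
  by rewrite addr0 mul1r subr0 mul1r addrC.
have yM : (y < M)%N by case/andP: rM.
set c := (y < x)%N.
have := IH (fun d => f (c + d)%N) rM.
rewrite (sum_recl (fun j => f (c + (des (ins j M (y :: r'))))%N)) ins0 des_cons2 yM.
move=> H.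
have E : \sum_(i < (size r').+1) f (des (ins i.+2 M [:: x, y & r']))
   = \sum_(i < (size r').+1) f (c + des (ins i.+1 M [:: y & r']))%N.
  by apply: eq_bigr => i _; rewrite !insS des_cons2.
rewrite (sum_recl (fun j => f (des (ins j.+1 M [:: x, y & r']))))  E insS ins0 !des_cons2 xM yM.
rewrite [(M < x)%N]ltnNge (ltnW xM).
have -> : \sum_(i < (size r').+1) f (c + des (ins i.+1 M [:: y & r']))%N =
  (des (y :: r')).+1%:R * f (c + des (y :: r'))%N + ((size r').+1%:R - (des (y :: r'))%:R) * f (c + (des (y :: r')).+1)%N - f (c + (1 + des (y::r')))%N.
  by rewrite -H /= addrC addKr.
have -> : size [:: x, y & r'] = (size r').+2 by [].
move: (des (y :: r')) (size r') => D S.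
rewrite /c; case: (y < x)%N => /=.
  rewrite !add1n !add0n -!natr1; ring.
rewrite !add0n -!natr1; ring.
Qed.

Fixpoint perms (N : nat) : seq (seq nat) :=
  if N is N'.+1 then [seq ins j N' t | t <- perms N', j <- iota 0 N] else [:: [::]].

Definition W (N m d : nat) : int := ((d <= m) * 'C(m - d + N, N))%N%:R.

Lemma sum_iota0 (F : nat -> int) n : \sum_(j <- iota 0 n) F j = \sum_(j < n) F j.
Proof. by rewrite -(big_mkord xpredT) /index_iota subn0. Qed.

Lemma iotaSr N : iota 0 N.+1 = rcons (iota 0 N) N.
Proof. by rewrite -addn1 iotaD add0n cats1. Qed.

Lemma perm_ins j N t : perm_eq (ins j N t) (N :: t).
Proof.
rewrite /ins -cat1s.
by rewrite perm_catCA cat1s (cat_take_drop j t).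
Qed.

Lemma perms_perm N t : t \in perms N -> perm_eq t (iota 0 N).
Proof.
elim: N t => [|N IH] t.
  by rewrite inE => /eqP ->.
rewrite iotaSr; case/allpairsP => [[t' j] /= [Ht' _ ->]].
apply: perm_trans (perm_ins j N t') _.
rewrite -cats1 perm_sym perm_catC cat1s perm_cons perm_sym.
exact: IH.
Qed.

Lemma perms_size N t : t \in perms N -> size t = N.
Proof. by move/perms_perm/perm_size; rewrite size_iota. Qed.

Lemma perms_all N t : t \in perms N -> all (fun y => y < N)%N t.
Proof.
move/perms_perm => H; apply/allP => y; rewrite (perm_mem H) mem_iota.
by rewrite add0n.
Qed.

Lemma W_step N m d :
  (d.+1)%:R * W N.+1 m d + (N%:R - d%:R) * W N.+1 m d.+1 = (m.+1)%:R * W N m d.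
Proof.
rewrite /W; case: (ltngtP d m) => Hdm.
- have [K' ->] : exists K', m = (d + K'.+1)%N by exists (m - d).-1; lia.
  have E1 : (d + K'.+1 - d = K'.+1)%N by lia.
  have E2 : (d + K'.+1 - d.+1 = K')%N by lia.
  rewrite E1 E2 !mul1n addSn binS addSnnS.
  have h := mul_bin_left (K' + N.+1) N.
  have E3 : (K' + N.+1 - N = K'.+1)%N by lia.
  rewrite E3 in h.
  move: h; set A := 'C(K' + N.+1, N.+1); set B := 'C(K' + N.+1, N) => h.
  have h' : (N.+1%:R * A%:R : int) = K'.+1%:R * B%:R by rewrite -!natrM h.
  rewrite natrD.
  transitivity (N.+1%:R * A%:R + d.+1%:R * B%:R : int).
    rewrite -!natr1; ring.
  rewrite h' -!natr1 natrD; ring.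
- by rewrite !mul0n !mulr0 addr0.
- subst d; rewrite subnn !add0n !binn /=.
  by rewrite mul0n mulr0 addr0 !mul1n.
Qed.

Lemma aN N m : \sum_(t <- perms N) W N m (des t) = (m.+1 ^ N)%N%:R.
Proof.
elim: N => [|N IH].
  by rewrite big_seq1 /W bin0 leq0n expn0.
rewrite big_allpairs_dep.
transitivity (\sum_(t <- perms N) (m.+1)%:R * W N m (des t)).
  rewrite big_seq [RHS]big_seq; apply: eq_bigr => t Ht.
  rewrite sum_iota0.
  have := ins_sum (W N.+1 m) (perms_all Ht); rewrite (perms_size Ht) => ->.
  exact: W_step.
by rewrite -big_distrr IH expnS natrM.
Qed.

Lemma ins_index j N t : N \notin t -> (j <= size t)%N -> index N (ins j N t) = j.
Proof.
move=> Nt jt; rewrite /ins index_cat.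
have -> : (N \in take j t) = false by apply/negbTE; apply: contra Nt; apply: mem_take.
by rewrite /= eqxx addn0 size_takel.
Qed.

Lemma ins_rem j N t : N \notin t -> (j <= size t)%N -> rem N (ins j N t) = t.
Proof.
move=> Nt jt; rewrite remE ins_index //.
have hs : size (take j t) = j by rewrite size_takel.
rewrite /ins take_size_cat // -cat_rcons drop_size_cat ?size_rcons ?hs //.
by rewrite cat_take_drop.
Qed.

Lemma rem_ins N t : N \in t -> ins (index N t) N (rem N t) = t.
Proof.
move=> Nt; rewrite remE /ins.
have hs : size (take (index N t) t) = index N t by rewrite size_takel // ltnW // index_mem.
rewrite take_size_cat // drop_size_cat //.
by rewrite -[N in N :: _](nth_index 0 Nt) -drop_nth ?index_mem // cat_take_drop.
Qed.

Lemma perms_uniq N : uniq (perms N).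
Proof.
elim: N => [|N IH] //.
apply: allpairs_uniq => //; first exact: iota_uniq.
move=> [t j] [t' j'] H1 H2. case/allpairsP: H1 => [[a b] /= [Ha Hb [-> ->]]]. case/allpairsP: H2 => [[a' b'] /= [Ha' Hb' [-> ->]]] /= E.
have Na : N \notin a by apply/negP => /(allP (perms_all Ha)); rewrite ltnn.
have Na' : N \notin a' by apply/negP => /(allP (perms_all Ha')); rewrite ltnn.
have bs : (b <= size a)%N by rewrite (perms_size Ha) -ltnS; have := (Hb : b \in iota 0 N.+1); rewrite mem_iota.
have bs' : (b' <= size a')%N by rewrite (perms_size Ha') -ltnS; have := (Hb' : b' \in iota 0 N.+1); rewrite mem_iota.
have eb : b = b' by rewrite -(ins_index Na bs) -(ins_index Na' bs') E.
have ea : a = a' by rewrite -(ins_rem Na bs) -(ins_rem Na' bs') E.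
by rewrite ea eb.
Qed.

Lemma perms_mem N t : (t \in perms N) = perm_eq t (iota 0 N).
Proof.
apply/idP/idP; first exact: perms_perm.
elim: N t => [|N IH] t.
  by move=> /perm_size; rewrite size_iota /= => /size0nil ->; rewrite inE.
move=> Ht.
have Nt : N \in t by rewrite (perm_mem Ht) mem_iota add0n ltnSn.
rewrite -(rem_ins Nt).
apply: (allpairs_f (fun t j => ins j N t)).
  apply: IH.
  rewrite -(perm_cons N); apply: (@perm_trans _ t); first by rewrite perm_sym; exact: perm_to_rem.
  apply: (perm_trans Ht); rewrite iotaSr -cats1 perm_catC //.
rewrite mem_iota add0n.
have := index_mem N t; rewrite Nt (perm_size Ht) size_iota => ->; by [].
Qed.

Lemma perms_size_all N : size (perms N) = N`!.
Proof.
elim: N => [|N IH] //.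
rewrite (_ : perms N.+1 = [seq ins j N t | t <- perms N, j <- iota 0 N.+1]) //.
by rewrite size_allpairs IH size_iota factS mulnC.
Qed.

Definition cdes (s : seq nat) : nat := if s is x :: r then des (x :: rcons r x) else 0%N.

Lemma des_rcons y u z : des (rcons (y :: u) z) = (des (y :: u) + (z < last y u))%N.
Proof.
elim: u y => [|w u IH] y; first by rewrite /= addn0.
rewrite (_ : rcons [:: y, w & u] z = [:: y, w & rcons u z]) // des_cons2.
by rewrite -[w :: rcons u z]/(rcons (w :: u) z) IH des_cons2 addnA.
Qed.

Lemma cdes_rot1 s : cdes (rot 1 s) = cdes s.
Proof.
case: s => [|x r] //; rewrite rot1_cons.
case: r => [|y r'] //.
rewrite rcons_cons /cdes -/(rcons (y :: rcons r' x) y) des_rcons last_rcons.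
rewrite rcons_cons des_cons2 addnC.
by [].
Qed.

Lemma cdes_rot k s : cdes (rot k s) = cdes s.
Proof.
elim: k => [|k IH]; first by rewrite rot0.
case: (ltnP k (size s)) => hk.
  by rewrite rotS // cdes_rot1 IH.
by rewrite rot_oversize // ltnW // ltnS.
Qed.

Lemma des_map t : des (map S t) = des t.
Proof.
elim: t => [|x t IH] //; case: t IH => [|y t] IH //.
by rewrite map_cons map_cons !des_cons2 -map_cons IH ltnS.
Qed.

Lemma cdes_0S t : t != [::] -> cdes (0%N :: map S t) = (des t).+1.
Proof.
case: t => [|y t] // _.
rewrite /cdes (_ : 0%N :: rcons (map S (y :: t)) 0%N = [:: 0%N, y.+1 & rcons (map S t) 0%N]) //.
rewrite des_cons2 ltn0 add0n (_ : y.+1 :: rcons (map S t) 0%N = rcons (y.+1 :: map S t) 0%N) //.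
rewrite des_rcons (_ : y.+1 :: map S t = map S (y :: t)) // des_map.
by rewrite last_map addn1.
Qed.

Lemma des_nth s : des s = (\sum_(i < (size s).-1) (nth 0 s i.+1 < nth 0 s i))%N.
Proof.
elim: s => [|x s IH]; first by rewrite big_ord0.
case: s IH => [|y r] IH; first by rewrite big_ord0.
by rewrite des_cons2 IH /= big_ord_recl /=.
Qed.

Lemma cdes_nth s : cdes s = (\sum_(i < size s) (nth 0 s (i.+1 %% size s) < nth 0 s i))%N.
Proof.
case: s => [|x r]; first by rewrite big_ord0.
rewrite /cdes des_nth /= size_rcons.
apply: eq_bigr => [[i hi]] _ /=.
have e1 : nth 0 (x :: rcons r x) i = nth 0 (x :: r) i.
  case: i hi => [|i] hi //=; rewrite nth_rcons; by rewrite ltnS in hi; rewrite hi.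
rewrite e1 nth_rcons.
case: (ltngtP i (size r)) => hir.
- by rewrite modn_small.
- by rewrite ltnS in hi; move: hi; rewrite leqNgt hir.
- by rewrite hir modnn.
Qed.

Lemma index_rotr c (r : seq nat) : 0%N \notin r -> (c <= size r)%N -> index 0%N (rotr c (0%N :: r)) = c.
Proof.
move=> nr hc; rewrite /rotr.
case: c hc => [|c] hc.
  by rewrite subn0 rot_size.
have -> : (size (0%N :: r) - c.+1 = (size r - c.+1).+1)%N by rewrite /=; lia.
rewrite /rot index_cat.
have -> : (0%N \in drop (size r - c.+1).+1 (0%N :: r)) = false.
  by apply/negbTE; apply: contra nr => /= /mem_drop.
rewrite size_drop /=; lia.
Qed.

Lemma map_S_iota N : map S (iota 0 N) = iota 1 N.
Proof. by rewrite (iotaDl 1 0) ; apply: eq_map => x; rewrite add1n. Qed.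

Definition Rl N := [seq rotr c (0%N :: map S t) | c <- iota 0 N.+1, t <- perms N].

Lemma Rl_perm N : perm_eq (Rl N) (perms N.+1).
Proof.
apply: uniq_perm.
- apply: allpairs_uniq; [exact: iota_uniq | exact: perms_uniq |].
  move=> [c t] [c' t'] H1 H2.
  case/allpairsP: H1 => [[a b] [Ha Hb [-> ->]]].
  case/allpairsP: H2 => [[a' b'] [Ha' Hb' [-> ->]]] /= E.
  have nb : 0%N \notin map S b by apply/mapP => [[x _]].
  have nb' : 0%N \notin map S b' by apply/mapP => [[x _]].
  have ha : (a <= size (map S b))%N.
    by rewrite size_map (perms_size Hb) -ltnS; have := (Ha : a \in iota 0 N.+1); rewrite mem_iota.
  have ha' : (a' <= size (map S b'))%N.
    by rewrite size_map (perms_size Hb') -ltnS; have := (Ha' : a' \in iota 0 N.+1); rewrite mem_iota.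
  have ea : a = a' by rewrite -(index_rotr nb ha) -(index_rotr nb' ha') E.
  rewrite -ea in E; have := rotr_inj E => -[/inj_map E2].
  by rewrite ea (E2 succn_inj).
- exact: perms_uniq.
move=> u; apply/idP/idP.
- case/allpairsP => [[c t] [Hc Ht ->]].
  rewrite perms_mem /rotr perm_rot /= perm_cons -map_S_iota.
  by apply: perm_map; rewrite -perms_mem.
move=> Hu; have Hp := Hu; rewrite perms_mem in Hp.
have u0 : 0%N \in u by rewrite (perm_mem Hp) mem_iota.
have := rot_index u0; set c := index 0%N u; set r := (drop _ _ ++ _) => Er.
have Hr : perm_eq r (iota 1 N).
  by rewrite -(perm_cons 0%N) -Er perm_rot.
have rpos : forall x, x \in r -> (0 < x)%N.
  by move=> x; rewrite (perm_mem Hr) mem_iota; case: x.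
have Emap : map S (map predn r) = r.
  rewrite -map_comp -[RHS]map_id; apply/eq_in_map => x /rpos /=.
  by case: x.
rewrite -(rotK c u) Er -Emap.
apply: (allpairs_f (fun c t => rotr c (0%N :: map S t))).
  rewrite mem_iota add0n.
  by have := index_mem 0%N u; rewrite u0 (perm_size Hp) size_iota => ->.
rewrite perms_mem -(mapK succnK (iota 0 N)) map_S_iota.
exact: perm_map.
Qed.

Local Open Scope ring_scope.

Lemma rot_sum N (F : nat -> int) : (0 < N)%N ->
  \sum_(t <- perms N.+1) F (cdes t) = N.+1%:R * \sum_(t <- perms N) F (des t).+1.
Proof.
move=> N0.
rewrite -(perm_big _ (Rl_perm N)) /Rl big_allpairs_dep /=.
transitivity (\sum_(c <- iota 0 N.+1) \sum_(t <- perms N) F (des t).+1).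
  apply: eq_bigr => c _; rewrite big_seq [RHS]big_seq; apply: eq_bigr => t Ht.
  rewrite /rotr cdes_rot cdes_0S //.
  by apply/eqP => t0; move: (perms_size Ht); rewrite t0 /= => E; rewrite -E in N0.
by rewrite sum_iota0 sumr_const card_ord mulr_natl.
Qed.

Local Open Scope ring_scope.

Definition phi n (s : 'S_n) : seq nat := [seq val (s i) | i <- enum 'I_n].

Lemma phi_inj n : injective (@phi n).
Proof.
move=> s s' /eq_in_map E; apply/permP => i; apply: val_inj.
by apply: E; rewrite mem_enum.
Qed.

Lemma phi_perm n (s : 'S_n) : phi s \in perms n.
Proof.
rewrite perms_mem /phi -val_enum_ord (map_comp val s).
apply: perm_map; apply: uniq_perm.
- by rewrite (map_inj_uniq (@perm_inj _ s)) enum_uniq.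
- exact: enum_uniq.
move=> x; rewrite mem_enum inE.
by apply/mapP; exists (s^-1%g x); rewrite ?mem_enum ?permKV.
Qed.

Lemma size_index_enum_perm n : size (index_enum {perm 'I_n}) = n`!.
Proof. by rewrite -(filter_predT (index_enum _)) deprecated_filter_index_enum -cardT card_Sn. Qed.

Lemma sum_phi n (F : seq nat -> int) : \sum_(s : 'S_n) F (phi s) = \sum_(t <- perms n) F t.
Proof.
rewrite -(big_map (@phi n) xpredT F).
apply: perm_big; apply: uniq_perm.
- by rewrite (map_inj_uniq (@phi_inj n)) index_enum_uniq.
- exact: perms_uniq.
apply: (uniq_min_size (s1 := [seq phi i | i <- index_enum _]) (s2 := perms n) _ _ _).2.
- by rewrite (map_inj_uniq (@phi_inj n)) index_enum_uniq.
- by move=> t /mapP [s _ ->]; apply: phi_perm.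
by rewrite size_map size_index_enum_perm perms_size_all.
Qed.

Lemma ordS_neq N (i : 'I_N.+2) : ordS i != i.
Proof.
apply/eqP => /(congr1 val) /=.
case: (ltnP i.+1 N.+2) => h.
  by rewrite modn_small // => /eqP; rewrite eqn_leq ltnn.
have e : i.+1 = N.+2 by apply/eqP; rewrite eqn_leq h ltn_ord.
by rewrite e modnn => e0; move: e; rewrite -e0.
Qed.

Lemma outdeg_inv N (s : 'S_N.+2) :
  dfs_outdeg (Tour N.+2) (Cycle N.+2) s^-1%g = (\sum_(i : 'I_N.+2) (s (ordS i) < s i))%N.
Proof.
rewrite /dfs_outdeg (reindex_inj (@perm_inj _ s)) /=.
apply: eq_bigr => i _.
rewrite (reindex_inj (@perm_inj _ s)) /=.
rewrite (bigD1 (ordS i)) /=; last by rewrite (inj_eq (@perm_inj _ s)) eq_sym ordS_neq.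
rewrite big1 ?addn0.
  by rewrite /Tour /Cycle !permK eqxx muln1.
move=> j /andP [_ hj]; rewrite /Cycle !permK.
have -> : (val j == (val i).+1 %% N.+2)%N = false.
  by apply/negbTE; rewrite -[((val i).+1 %% N.+2)%N]/(val (ordS i)) val_eqE.
by rewrite muln0.
Qed.

Lemma cdes_phi N (s : 'S_N.+1) :
  cdes (phi s) = (\sum_(i : 'I_N.+1) (s (ordS i) < s i))%N.
Proof.
have hs : size (phi s) = N.+1 by rewrite size_map size_enum_ord.
rewrite cdes_nth.
have nthp : forall k, (k < N.+1)%N -> nth 0%N (phi s) k = val (s (inord k)).
  move=> k hk; rewrite (nth_map ord0) ?size_enum_ord //.
  by congr (val (s _)); apply: val_inj; rewrite /= nth_enum_ord // inordK.
move: (phi s) hs nthp => t -> nthp.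
apply: eq_bigr => i _.
rewrite !nthp ?ltn_pmod // inord_val.
by congr (val (s _) < _)%N; apply: val_inj; rewrite /= inordK // ltn_pmod.
Qed.

Lemma outdeg1 (s : 'S_1) : dfs_outdeg (Tour 1) (Cycle 1) s = 0%N.
Proof.
rewrite /dfs_outdeg big1 // => a _; rewrite big1 // => b.
by rewrite (ord1 a) (ord1 b) eqxx.
Qed.

Local Open Scope ring_scope.

Definition Pop (u : nat -> int) : nat -> int := fun m => \sum_(k < m.+1) u k.
Definition Dop (u : nat -> int) : nat -> int :=
  fun k => u k - (if k is k'.+1 then u k' else 0).

Lemma PopE u m : Pop u m = \sum_(k < m.+1) u k. Proof. by []. Qed.

Lemma DP u : Dop (Pop u) = u.
Proof.
apply: functional_extensionality => k; rewrite /Dop /Pop.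
case: k => [|k]; first by rewrite big_ord1 subr0.
by rewrite big_ord_recr /= addrC addrK.
Qed.

Lemma iterDP r u : iter r Dop (iter r Pop u) = u.
Proof.
elim: r u => [|r IH] u //.
by rewrite iterSr iterS DP IH.
Qed.

Lemma coef_D (h : nat -> int) r K k : (k < K)%N ->
  ((1 - 'X) ^+ r * \poly_(m < K) h m)`_k = iter r Dop h k.
Proof.
elim: r k => [|r IH] k hk.
  by rewrite expr0 mul1r coef_poly hk.
rewrite exprS -mulrA mulrBl mul1r coefB coefXM iterS /Dop IH //.
by case: k hk => [|k] hk //= ; rewrite IH // ltnW.
Qed.

Lemma iterP_sum (I : finType) (F : I -> nat -> int) r m :
  iter r Pop (fun k => \sum_i F i k) m = \sum_i iter r Pop (F i) m.
Proof.
elim: r m => [|r IH] m //.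
rewrite iterS PopE.
under eq_bigr => k _ do rewrite IH.
rewrite exchange_big; apply: eq_bigr => i _.
by rewrite iterS PopE.
Qed.

Lemma hockey r m d :
  (\sum_(k < m.+1) ((d <= k) * 'C(k - d + r, r)))%N = ((d <= m) * 'C(m - d + r.+1, r.+1))%N.
Proof.
elim: m => [|m IH].
  rewrite big_ord1; case: d => [|d] //=.
  by rewrite !add0n !binn.
rewrite big_ord_recr /= IH.
case: (ltngtP d m.+1) => hd.
- have h1 : (d <= m)%N by rewrite -ltnS.
  rewrite h1 !mul1n.
  have e : (m.+1 - d = (m - d).+1)%N by lia.
  rewrite e [in RHS]addSn binS addSnnS.
  by [].
- by rewrite (leqNgt d m) (ltn_trans (ltnSn m) hd).
- subst d; rewrite ltnn subnn !add0n !binn; by [].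
Qed.

Lemma delta_iter r d m :
  iter r.+1 Pop (fun k => (k == d)%:R) m = W r m d.
Proof.
elim: r m => [|r IH] m.
  rewrite /= /Pop /W addn0 bin0 muln1.
  elim: m => [|m IHm]; first by rewrite big_ord1; case: d.
  rewrite big_ord_recr /= IHm.
  case: (ltngtP d m.+1) => hd.
  - by rewrite -ltnS hd addr0.
  - by rewrite leqNgt (ltn_trans (ltnSn m) hd) addr0.
  - by subst d; rewrite ltnn add0r.
rewrite iterS PopE /W.
under eq_bigr => k _ do rewrite IH /W.
by rewrite -natr_sum hockey.
Qed.

Lemma main_sum N m :
  \sum_(s : 'S_N.+1) W N m (dfs_outdeg (Tour N.+1) (Cycle N.+1) s) = ((N.+1 * m ^ N)%N)%:R.
Proof.
case: N => [|N].
  rewrite (eq_bigr (fun _ => W 0 m 0)); last by move=> s _; rewrite outdeg1.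
  by rewrite sumr_const card_Sn /W addn0 bin0 /= expn0.
rewrite (reindex_inj invg_inj) /=.
under eq_bigr => s _ do rewrite outdeg_inv -cdes_phi.
rewrite (sum_phi N.+2 (fun t => W N.+1 m (cdes t))) rot_sum //.
case: m => [|m].
  by rewrite big1 ?mulr0 ?exp0n ?muln0 // => t _; rewrite /W.
rewrite (eq_bigr (fun t => W N.+1 m (des t))); last by move=> t _; rewrite /W subSS ltnS.
by rewrite aN -natrM.
Qed.

Theorem mainTheorem14 (n : nat) : (0 < n)%N ->
  forall k : nat,
    (ODP (Tour n) (Cycle n))`_k =
    ((1 - 'X) ^+ n * \poly_(m < k.+1) ((n * m ^ (n - 1))%N)%:Z)`_k.
Proof.
case: n => [|N] // _ k.
rewrite coef_D //.
set h := (fun m => _ : int).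
set O := fun k => (ODP (Tour N.+1) (Cycle N.+1))`_k.
have HO : iter N.+1 Pop O = h.
  apply: functional_extensionality => m.
  have EO : O = fun k => \sum_(s : 'S_N.+1) (k == dfs_outdeg (Tour N.+1) (Cycle N.+1) s)%:R.
    apply: functional_extensionality => j.
    by rewrite /O /ODP coef_sum; apply: eq_bigr => s _; rewrite coefXn.
  rewrite EO iterP_sum.
  under eq_bigr => s _ do rewrite delta_iter.
  by rewrite main_sum /h subn1 /= natz.
transitivity (iter N.+1 Dop (iter N.+1 Pop O) k); first by rewrite iterDP.
by rewrite HO.
Qed.
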